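(* Let $\mathfrak{q}$ be an $n\times n$ quantum parameter matrix over a field $k$ and $V$ a $k$-vector space with basis $v_1,\dots,v_n$. Let $\mathcal{P}$ be the partition of $[n]$ into the equivalence classes of $\mathcal{R}$. Then $$\mathrm{Aut}_{\mathrm{gr}}(S_{\mathfrak{q}}(V))\ \cong\ \prod_{D\in\mathcal{P}}\mathrm{Aut}_{\mathrm{gr}}\big(S_{\mathfrak{q}_{DD}}(V_D)\big).$$
   Context: An $n\times n$ quantum parameter matrix is a matrix $\mathfrak{q}=(q_{ij})$ over $k$ with $q_{ii}=1$ and $q_{ij}q_{ji}=1$ for all $i,j$. $S_{\mathfrak{q}}(V)$ is the $k$-algebra generated by $v_1,\dots,v_n$ with relations $v_jv_i=q_{ij}v_iv_j$, graded by $\deg v_i=1$; $\mathrm{Aut}_{\mathrm{gr}}$ denotes the group of degree-preserving algebra automorphisms. For $D\subseteq[n]$, $V_D=\mathrm{span}\{v_i:i\in D\}$ and $\mathfrak{q}_{DD}=(q_{ij})_{i,j\in D}$, a quantum parameter matrix defining $S_{\mathfrak{q}_{DD}}(V_D)$ with respect to $\{v_i:i\in D\}$. Define a relation on $[n]$ by $i\to\ell$ whenever there is a chain $i=i_0,i_1,\dots,i_p=\ell$ ($p\ge0$) such that for every $1\le s\le p$ either (1) row $i_{s-1}$ of $\mathfrak{q}$ is a permutation of row $i_s$ (as a sequence of entries), or (2) $q_{i_{s-1}i_s}\ne q_{i_ti_s}$ for some $0\le t<s$. $\mathcal{R}$ is the equivalence relation on $[n]$ generated by this relation. *)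

(* Defs.v *)
From HB Require Import structures.
From mathcomp Require Import all_boot all_order all_algebra.
From Stdlib Require Import Relations.
Set Implicit Arguments. Unset Strict Implicit. Unset Printing Implicit Defensive.
Import GRing.Theory.
Local Open Scope ring_scope.

Section QuantumAffine.
Variable k : fieldType.

Definition is_qpm (I : finType) (q : I -> I -> k) : Prop :=
  (forall i, q i i = 1) /\ (forall i j, q i j * q j i = 1).

Definition alg_hom (A B : algType k) (f : A -> B) : Prop :=
  [/\ forall x y, f (x + y) = f x + f y,
      forall (c : k) x, f (c *: x) = c *: f x,
      forall x y, f (x * y) = f x * f y
    & f 1 = 1].

Definition q_rels (I : finType) (q : I -> I -> k) (B : algType k) (b : I -> B) :
  Prop := forall i j, b j * b i = q i j *: (b i * b j).

(* (A, v) is S_q(V): the k-algebra generated by v_i (i in I) with the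
   relations v_j v_i = q_ij v_i v_j, given by its universal property *)
Definition is_Sq (I : finType) (q : I -> I -> k) (A : algType k) (v : I -> A) :
  Prop :=
  q_rels q v /\
  forall (B : algType k) (b : I -> B), q_rels q b ->
    exists f : A -> B,
      [/\ alg_hom f, (forall i, f (v i) = b i)
        & forall g : A -> B, alg_hom g -> (forall i, g (v i) = b i) -> g =1 f].

(* homogeneous component of degree d (grading deg v_i = 1):
   the span of the monomials v_{w 0} ... v_{w (d-1)} *)
Definition deg_part (I : finType) (A : algType k) (v : I -> A) (d : nat) (x : A)
  : Prop :=
  exists c : {ffun 'I_d -> I} -> k,
    x = \sum_(w : {ffun 'I_d -> I}) c w *: \prod_(j < d) v (w j).

Definition gr_aut (I : finType) (A : algType k) (v : I -> A) (f : A -> A) : Prop :=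
  [/\ alg_hom f, bijective f
    & forall d x, deg_part v d x -> deg_part v d (f x)].

Definition row_perm n (q : 'M[k]_n) (i j : 'I_n) : bool :=
  perm_eq [seq q i x | x <- enum 'I_n] [seq q j x | x <- enum 'I_n].

(* i -> l : chain i = i_0, ..., i_p = l (here s = i_0 :: rest) *)
Definition chain_ok n (q : 'M[k]_n) (i : 'I_n) (rest : seq 'I_n) : Prop :=
  let s := i :: rest in
  forall m : nat, (0 < m < size s)%N ->
    let a := nth i s m.-1 in let b := nth i s m in
    row_perm q a b \/ exists t : nat, (t < m)%N /\ q a b <> q (nth i s t) b.

Definition qarrow n (q : 'M[k]_n) (i l : 'I_n) : Prop :=
  exists rest : seq 'I_n, chain_ok q i rest /\ last i rest = l.

Definition qR n (q : 'M[k]_n) : relation 'I_n :=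
  clos_refl_sym_trans 'I_n (qarrow q).

Definition is_class n (q : 'M[k]_n) (D : {set 'I_n}) : Prop :=
  exists i, forall j, j \in D <-> qR q i j.

Definition qsub n (q : 'M[k]_n) (D : {set 'I_n})
  : {i : 'I_n | i \in D} -> {i : 'I_n | i \in D} -> k :=
  fun i j => q (val i) (val j).

End QuantumAffine.
Arguments qsub [k n] q D.

(* Main.v *)
Require Import Defs.
From HB Require Import structures.
From mathcomp Require Import all_boot all_order all_algebra.
From Stdlib Require Import Relations.
From Stdlib Require Import Classical IndefiniteDescription.
From mathcomp Require Import perm ring.
Set Implicit Arguments. Unset Strict Implicit. Unset Printing Implicit Defensive.
Import GRing.Theory.
Local Open Scope ring_scope.

Section AlgHom.
Variable k : fieldType.

Lemma ah0 (B C : algType k) (f : B -> C) : alg_hom f -> f 0 = 0.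
Proof. by case=> _ fZ _ _; rewrite -(scale0r (0:B)) fZ scale0r. Qed.

Lemma ahD (B C : algType k) (f : B -> C) : alg_hom f -> forall x y, f (x + y) = f x + f y.
Proof. by case. Qed.
Lemma ahZ (B C : algType k) (f : B -> C) : alg_hom f -> forall (c : k) x, f (c *: x) = c *: f x.
Proof. by case. Qed.
Lemma ahM (B C : algType k) (f : B -> C) : alg_hom f -> forall x y, f (x * y) = f x * f y.
Proof. by case. Qed.
Lemma ah1 (B C : algType k) (f : B -> C) : alg_hom f -> f 1 = 1.
Proof. by case. Qed.

Lemma ah_sum (B C : algType k) (f : B -> C) (I : Type) (r : seq I) (P : pred I) (F : I -> B) :
  alg_hom f -> f (\sum_(i <- r | P i) F i) = \sum_(i <- r | P i) f (F i).
Proof. by move=> hf; apply: (big_morph f (ahD hf) (ah0 hf)). Qed.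

Lemma ah_prod (B C : algType k) (f : B -> C) (I : Type) (r : seq I) (P : pred I) (F : I -> B) :
  alg_hom f -> f (\prod_(i <- r | P i) F i) = \prod_(i <- r | P i) f (F i).
Proof. by move=> hf; apply: (big_morph f (ahM hf) (ah1 hf)). Qed.

Lemma ah_lin (B C : algType k) (f : B -> C) (I : Type) (r : seq I) (c : I -> k) (F : I -> B) :
  alg_hom f -> f (\sum_(i <- r) c i *: F i) = \sum_(i <- r) c i *: f (F i).
Proof. by move=> hf; rewrite ah_sum //; apply: eq_bigr => i _; rewrite (ahZ hf). Qed.

Lemma ah_comp (B C D : algType k) (f : C -> D) (g : B -> C) :
  alg_hom f -> alg_hom g -> alg_hom (f \o g).
Proof.
move=> hf hg; split=> /= [x y|c x|x y|]; first by rewrite (ahD hg) (ahD hf).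
- by rewrite (ahZ hg) (ahZ hf).
- by rewrite (ahM hg) (ahM hf).
by rewrite (ah1 hg) (ah1 hf).
Qed.

Lemma ah_id (B : algType k) : alg_hom (@id B).
Proof. by []. Qed.

Lemma ah_inv (B C : algType k) (f : B -> C) (g : C -> B) :
  alg_hom f -> cancel f g -> cancel g f -> alg_hom g.
Proof.
move=> hf fK gK; split=> [x y|c x|x y|].
- by rewrite -{1}(gK x) -{1}(gK y) -(ahD hf) fK.
- by rewrite -{1}(gK x) -(ahZ hf) fK.
- by rewrite -{1}(gK x) -{1}(gK y) -(ahM hf) fK.
by rewrite -(ah1 hf) fK.
Qed.

Lemma prod_scale (B : algType k) (d : nat) (a : 'I_d -> k) (x : 'I_d -> B) :
  \prod_(j < d) (a j *: x j) = (\prod_(j < d) a j) *: \prod_(j < d) x j.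
Proof.
elim: d a x => [|d IH] a x; first by rewrite !big_ord0 scale1r.
rewrite !big_ord_recr /= IH -scalerAl -scalerAr scalerA.
done.
Qed.

End AlgHom.
Section Span.
Variable k : fieldType.
Definition inspan (J : finType) (B : algType k) (w : J -> B) (x : B) : Prop :=
  exists c : J -> k, x = \sum_i c i *: w i.

Variables (J : finType) (B : algType k) (w : J -> B).
Lemma inspan0 : inspan w 0.
Proof. by exists (fun _ => 0); rewrite big1 // => i _; rewrite scale0r. Qed.
Lemma inspanD x y : inspan w x -> inspan w y -> inspan w (x + y).
Proof.
case=> c -> [c' ->]; exists (fun i => c i + c' i).
by rewrite -big_split; apply: eq_bigr => i _; rewrite scalerDl.
Qed.
Lemma inspanZ (a : k) x : inspan w x -> inspan w (a *: x).
Proof.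
case=> c ->; exists (fun i => a * c i).
by rewrite scaler_sumr; apply: eq_bigr => i _; rewrite scalerA.
Qed.
Lemma inspan_gen j : inspan w (w j).
Proof.
exists (fun i => (i == j)%:R); rewrite (bigD1 j) //= eqxx scale1r big1 ?addr0 //.
by move=> i /negbTE ->; rewrite scale0r.
Qed.
Lemma inspan_sum (I : Type) (r : seq I) (P : pred I) (F : I -> B) :
  (forall i, P i -> inspan w (F i)) -> inspan w (\sum_(i <- r | P i) F i).
Proof.
move=> h; apply: (big_ind (inspan w)); [exact: inspan0| exact: inspanD| exact: h].
Qed.
Lemma inspan_lin (c : J -> k) : inspan w (\sum_i c i *: w i).
Proof. by exists c. Qed.
End Span.

Section Gen.
Variable k : fieldType.
Variables (J : finType) (qq : J -> J -> k) (B : algType k) (w : J -> B).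
Hypothesis Hq : is_qpm qq.
Hypothesis HS : is_Sq qq w.

Lemma qrels_hom (C : algType k) (f : B -> C) : alg_hom f -> q_rels qq (f \o w).
Proof.
move=> hf i j /=; rewrite -!(ahM hf) -(ahZ hf); congr f; exact: HS.1.
Qed.

Lemma hom_exists (C : algType k) (b : J -> C) : q_rels qq b ->
  exists f : B -> C, alg_hom f /\ forall i, f (w i) = b i.
Proof. by move=> hb; have [f [hf fb _]] := HS.2 C b hb; exists f. Qed.

Lemma hom_ext (C : algType k) (f g : B -> C) : alg_hom f -> alg_hom g ->
  (forall i, f (w i) = g (w i)) -> f =1 g.
Proof.
move=> hf hg e; have [h [hh hb U]] := HS.2 C (f \o w) (qrels_hom hf).
by move=> x; rewrite (U f hf (fun _ => erefl)) (U g hg (fun i => esym (e i))).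
Qed.

Lemma coef_ex : exists coef : J -> B -> k,
  True /\
  (forall a x y, coef a (x + y) = coef a x + coef a y) /\
  (forall a (c : k) x, coef a (c *: x) = c * coef a x) /\
  (forall a b, coef a (w b) = (a == b)%:R).
Proof.
pose N := #|J|.
pose b (a : J) : 'M[k]_N.+1 := delta_mx 0 (lift 0 (enum_rank a)).
have hb : q_rels qq b.
  move=> i j; rewrite -!mulmxE !mul_delta_mx_cond.
  have /negbTE -> : (lift (0 : 'I_N.+1) (enum_rank i) != 0).
    by rewrite eq_sym neq_lift.
  have /negbTE -> : (lift (0 : 'I_N.+1) (enum_rank j) != 0).
    by rewrite eq_sym neq_lift.
  by rewrite !mulr0n scaler0.
have [f [hf fb]] := hom_exists hb.
exists (fun a x => f x 0 (lift 0 (enum_rank a))); split; first by [].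
split; first by move=> a x y; rewrite (ahD hf) mxE.
split; first by move=> a c x; rewrite (ahZ hf) mxE.
move=> a a'; rewrite fb mxE eqxx /=.
have -> : (lift (0 : 'I_N.+1) (enum_rank a) == lift 0 (enum_rank a')) = (a == a').
  by rewrite (inj_eq (@lift_inj _ _)) (inj_eq (@enum_rank_inj _)).
done.
Qed.

Definition coef : J -> B -> k := sval (constructive_indefinite_description _ coef_ex).
Lemma coefP :
  (forall a x y, coef a (x + y) = coef a x + coef a y) /\
  (forall a (c : k) x, coef a (c *: x) = c * coef a x) /\
  (forall a b, coef a (w b) = (a == b)%:R).
Proof. rewrite /coef; case: constructive_indefinite_description => c /= [_ h]; exact: h. Qed.

Lemma coef0 a : coef a 0 = 0.
Proof. by have [_ [cZ _]] := coefP; rewrite -(scale0r (0 : B)) cZ mul0r. Qed.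

Lemma coef_sum a (I : Type) (r : seq I) (P : pred I) (F : I -> B) :
  coef a (\sum_(i <- r | P i) F i) = \sum_(i <- r | P i) coef a (F i).
Proof. have [cD _] := coefP; exact: (big_morph (coef a) (cD a) (coef0 a)). Qed.

Lemma coef_lin a (c : J -> k) : coef a (\sum_i c i *: w i) = c a.
Proof.
have [_ [cZ cw]] := coefP; rewrite coef_sum (bigD1 a) //= cZ cw eqxx mulr1 big1 ?addr0 //.
by move=> i /negbTE; rewrite cZ cw eq_sym => ->; rewrite mulr0.
Qed.

Lemma span_coef x : inspan w x -> x = \sum_i coef i x *: w i.
Proof. by case=> c ->; apply: eq_bigr => i _; rewrite coef_lin. Qed.

Lemma indep (c : J -> k) : \sum_i c i *: w i = 0 -> forall i, c i = 0.
Proof. by move=> h i; rewrite -(coef_lin i c) h coef0. Qed.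

End Gen.
Section DegBase.
Variable k : fieldType.
Variables (J : finType) (B : algType k) (w : J -> B).

Lemma deg_part0 d : deg_part w d 0.
Proof. by exists (fun _ => 0); rewrite big1 // => i _; rewrite scale0r. Qed.
Lemma deg_partD d x y : deg_part w d x -> deg_part w d y -> deg_part w d (x + y).
Proof.
case=> c -> [c' ->]; exists (fun i => c i + c' i).
by rewrite -big_split; apply: eq_bigr => i _; rewrite scalerDl.
Qed.
Lemma deg_partZ d (a : k) x : deg_part w d x -> deg_part w d (a *: x).
Proof.
case=> c ->; exists (fun i => a * c i).
by rewrite scaler_sumr; apply: eq_bigr => i _; rewrite scalerA.
Qed.
Lemma deg_part_sum d (I : Type) (r : seq I) (P : pred I) (F : I -> B) :
  (forall i, P i -> deg_part w d (F i)) -> deg_part w d (\sum_(i <- r | P i) F i).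
Proof.
move=> h; apply: (big_ind (deg_part w d)); [exact: deg_part0| exact: deg_partD| exact: h].
Qed.

Lemma deg1_span x : deg_part w 1 x -> inspan w x.
Proof.
case=> c ->; apply: inspan_sum => F _; apply: inspanZ.
by rewrite big_ord1; apply: inspan_gen.
Qed.

Lemma span_deg1 x : inspan w x -> deg_part w 1 x.
Proof.
case=> c ->; exists (fun F : {ffun 'I_1 -> J} => c (F ord0)).
pose h (a : J) : {ffun 'I_1 -> J} := [ffun _ => a].
have hb : {on predT, bijective h}.
  exists (fun F : {ffun 'I_1 -> J} => F ord0) => [a _|F _]; first by rewrite ffunE.
  by apply/ffunP => i; rewrite !ffunE (ord1 i).
rewrite (reindex h hb) /=; apply: eq_bigr => a _.
by rewrite big_ord1 /h ffunE.
Qed.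

End DegBase.
Section Deg.
Variable k : fieldType.
Variables (J : finType) (B : algType k) (w : J -> B).
Variables (J' : finType) (C : algType k) (w' : J' -> C).

Lemma deg_pres (phi : B -> C) : alg_hom phi -> (forall j, inspan w' (phi (w j))) ->
  forall d x, deg_part w d x -> deg_part w' d (phi x).
Proof.
move=> hphi hsp d x [c ->].
have [e he] := fin_all_exists hsp.
rewrite ah_lin //; apply: deg_part_sum => F _; apply: deg_partZ.
rewrite ah_prod //.
have -> : \prod_(j < d) phi (w (F j)) = \prod_(j < d) \sum_(b : J') e (F j) b *: w' b.
  by apply: eq_bigr => j _; rewrite he.
rewrite bigA_distr_bigA /=.
apply: deg_part_sum => G _.
rewrite prod_scale; apply: deg_partZ.
exists (fun G' => (G' == G)%:R); rewrite (bigD1 G) //= eqxx scale1r [X in _ + X]big1 ?addr0 //.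
by move=> G' /negbTE ->; rewrite scale0r.
Qed.
End Deg.
Lemma sumJ (J : finType) (V : zmodType) (G : J -> V) :
  \sum_(i : J) G i = \sum_(i < #|J|) G (enum_val i).
Proof. by rewrite -big_enum_val. Qed.

Lemma lin_swap (k : fieldType) (J : finType) (B : algType k) (w : J -> B)
  (I : finType) (x : I -> k) (y : I -> J -> k) :
  \sum_i x i *: \sum_c y i c *: w c = \sum_c (\sum_i x i * y i c) *: w c.
Proof.
rewrite (eq_bigr (fun i => \sum_c (x i * y i c) *: w c)); last first.
  by move=> i _; rewrite scaler_sumr; apply: eq_bigr => c _; rewrite scalerA.
by rewrite exchange_big /=; apply: eq_bigr => c _; rewrite scaler_suml.
Qed.

Lemma sum_delta (k : fieldType) (J : finType) (V : lmodType k) (G : J -> V) a :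
  \sum_c (a == c)%:R *: G c = G a.
Proof.
rewrite (bigD1 a) //= eqxx scale1r [X in _ + X]big1 ?addr0 //.
by move=> c; rewrite eq_sym => /negbTE ->; rewrite scale0r.
Qed.

Section Gen2.
Variable k : fieldType.
Variables (J : finType) (qq : J -> J -> k) (B : algType k) (w : J -> B).
Hypothesis Hq : is_qpm qq.
Hypothesis HS : is_Sq qq w.

Definition Pc (f : B -> B) (i a : J) : k := coef HS a (f (w i)).
Definition Pm (f : B -> B) : 'M[k]_#|J| :=
  \matrix_(i, a) Pc f (enum_val i) (enum_val a).

Definition good (f : B -> B) := alg_hom f /\ forall i, inspan w (f (w i)).

Lemma Pc_span f : good f -> forall i, f (w i) = \sum_a Pc f i a *: w a.
Proof. by case=> _ h i; rewrite /Pc {1}(span_coef HS (h i)). Qed.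

Lemma good_unit f : good f -> injective f -> Pm f \in unitmx.
Proof.
move=> gf finj; rewrite unitmxE unitfE; apply/negP => /det0P [u un0 hu].
pose x := \sum_i u 0 (enum_rank i) *: w i.
have fx : f x = 0.
  rewrite /x ah_lin; last by case: gf.
  rewrite (eq_bigr (fun i => u 0 (enum_rank i) *: \sum_a Pc f i a *: w a)); last first.
    by move=> i _; rewrite -Pc_span.
  rewrite lin_swap big1 // => c _.
  have := congr1 (fun M : 'rV_#|J| => M 0 (enum_rank c)) hu.
  rewrite !mxE /= => h.
  suff -> : \sum_i u 0 (enum_rank i) * Pc f i c = 0 by rewrite scale0r.
  rewrite [LHS]sumJ -[X in _ = X]h; apply: eq_bigr => j _; rewrite mxE enum_valK enum_rankK //.
have x0 : x = 0 by apply: finj; rewrite fx ah0 //; case: gf.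
have hu0 := indep HS x0.
move/negP: un0; apply; apply/eqP/rowP => j; rewrite mxE.
by rewrite -(enum_valK j); apply: hu0.
Qed.

Definition Nc (f : B -> B) (a i : J) : k := invmx (Pm f) (enum_rank a) (enum_rank i).

Lemma NP f : good f -> injective f -> forall a c, \sum_i Nc f a i * Pc f i c = (a == c)%:R.
Proof.
move=> gf fi a c.
have := congr1 (fun M : 'M_#|J| => M (enum_rank a) (enum_rank c)) (mulVmx (good_unit gf fi)).
rewrite !mxE /= (inj_eq (@enum_rank_inj _)) => <-.
rewrite sumJ; apply: eq_bigr => i _; rewrite /Nc enum_valK mxE !enum_rankK //.
Qed.

Lemma w_from_f f : good f -> injective f -> forall a, w a = \sum_i Nc f a i *: f (w i).
Proof.
move=> gf fi a.
rewrite (eq_bigr (fun i => Nc f a i *: \sum_c Pc f i c *: w c)); last first.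
  by move=> i _; rewrite -Pc_span.
rewrite lin_swap (eq_bigr (fun c => (a == c)%:R *: w c)); last first.
  by move=> c _; rewrite NP.
by rewrite sum_delta.
Qed.

Lemma good_inv f g : good f -> cancel f g -> cancel g f -> good g.
Proof.
move=> gf fK gK; have fi := can_inj fK.
have hg : alg_hom g by apply: ah_inv fK gK; case: gf.
split=> // a; rewrite (w_from_f gf fi a) ah_lin //.
by apply: inspan_sum => i _; apply: inspanZ; rewrite fK; apply: inspan_gen.
Qed.

Lemma matching f : good f -> injective f ->
  exists tau : J -> J, injective tau /\ forall i, Pc f i (tau i) != 0.
Proof.
move=> gf fi; have := good_unit gf fi; rewrite unitmxE unitfE.
case: (boolP [exists s : 'S_#|J|, [forall i, Pm f i (s i) != 0]]).
  case/existsP => s /forallP hs _.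
  exists (fun a => enum_val (s (enum_rank a))); split.
    move=> a b /enum_val_inj /perm_inj; exact: enum_rank_inj.
  by move=> a; have := hs (enum_rank a); rewrite mxE enum_rankK.
move=> hn; rewrite /determinant big1 ?eqxx // => s _.
have : ~~ [forall i, Pm f i (s i) != 0].
  by apply: contra hn => h; apply/existsP; exists s.
rewrite negb_forall => /existsP [i]; rewrite negbK => /eqP hi.
apply/eqP; rewrite mulf_eq0; apply/orP; right; apply/prodf_eq0.
by exists i => //; rewrite hi.
Qed.
End Gen2.
Section Rep4.
Variable k : fieldType.
Definition o4 (i : nat) (h : (i < 4)%N) : 'I_4 := Ordinal h.
Definition E4 (i j : nat) (hi : (i < 4)%N) (hj : (j < 4)%N) : 'M[k]_4 := delta_mx (o4 hi) (o4 hj).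
Definition X4 : 'M[k]_4 := E4 (isT : (1 < 4)%N) (isT : (0 < 4)%N) + E4 (isT : (3 < 4)%N) (isT : (2 < 4)%N).
Definition Y4 (q : k) : 'M[k]_4 := E4 (isT : (2 < 4)%N) (isT : (0 < 4)%N) + q *: E4 (isT : (3 < 4)%N) (isT : (1 < 4)%N).
Definition E30 : 'M[k]_4 := E4 (isT : (3 < 4)%N) (isT : (0 < 4)%N).

Lemma E4M i j i' j' hi hj hi' hj' :
  @E4 i j hi hj * @E4 i' j' hi' hj' = if j == i' then delta_mx (o4 hi) (o4 hj') else 0.
Proof.
rewrite -mulmxE /E4 mul_delta_mx_cond.
have -> : (o4 hj == o4 hi') = (j == i') by [].
by case: (j == i'); rewrite ?mulr1n ?mulr0n.
Qed.

Lemma prodXY (q a1 b1 a2 b2 : k) :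
  (a1 *: X4 + b1 *: Y4 q) * (a2 *: X4 + b2 *: Y4 q) = (a1 * b2 + q * (b1 * a2)) *: E30.
Proof.
rewrite /X4 /Y4 !mulrDl !mulrDr.
rewrite -!scalerAl -!scalerAr !mulrDl !mulrDr -!scalerAl -!scalerAr !E4M /=.
rewrite !scaler0 !addr0 !add0r /E30 /E4.
rewrite !scaler0 !addr0 !add0r !scalerA scalerDl.
by rewrite [b1 * _]mulrA [q * _]mulrC.
Qed.

Lemma E30_30 (s : k) : (s *: E30) (o4 (isT : (3 < 4)%N)) (o4 (isT : (0 < 4)%N)) = s.
Proof. by rewrite !mxE /= mulr1. Qed.

Definition E3 (i j : nat) (hi : (i < 3)%N) (hj : (j < 3)%N) : 'M[k]_3 :=
  delta_mx (Ordinal hi) (Ordinal hj).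
Definition J3 : 'M[k]_3 := E3 (isT : (1 < 3)%N) (isT : (0 < 3)%N) + E3 (isT : (2 < 3)%N) (isT : (1 < 3)%N).
Lemma J3M (a b : k) : (a *: J3) * (b *: J3) = (a * b) *: E3 (isT : (2 < 3)%N) (isT : (0 < 3)%N).
Proof.
rewrite -scalerAl -scalerAr scalerA /J3 mulrDl !mulrDr -!mulmxE /E3 !mul_delta_mx_cond /=.
by rewrite !mulr0n !mulr1n !addr0 add0r mulrC.
Qed.
End Rep4.
Lemma sum_delta_l (k : fieldType) (J : finType) (G : J -> k) a :
  \sum_x (x == a)%:R * G x = G a.
Proof.
rewrite (bigD1 a) //= eqxx mul1r [X in _ + X]big1 ?addr0 //.
by move=> x /negbTE ->; rewrite mul0r.
Qed.
Lemma sum_delta_r (k : fieldType) (J : finType) (G : J -> k) a :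
  \sum_x G x * (x == a)%:R = G a.
Proof. by rewrite -[RHS](sum_delta_l G a); apply: eq_bigr => x _; rewrite mulrC. Qed.
Lemma dd (k : fieldType) (J : finType) (F : J -> J -> k) a b :
  \sum_x \sum_y F x y * ((x == a)%:R * (y == b)%:R) = F a b.
Proof.
rewrite -(sum_delta_l (fun x => F x b) a); apply: eq_bigr => x _.
rewrite -(sum_delta_r (F x) b) mulr_sumr; apply: eq_bigr => y _.
by rewrite mulrA mulrA [_ * F x y]mulrC.
Qed.

Ltac cl := rewrite ?eqxx /= ?mulr0n ?mulr1n ?mul0r ?mulr0 ?mul1r ?mulr1 ?add0r ?addr0.

Section Gen3.
Variable k : fieldType.
Variables (J : finType) (qq : J -> J -> k) (B : algType k) (w : J -> B).
Hypothesis Hq : is_qpm qq.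
Hypothesis HS : is_Sq qq w.

Lemma deg2 (al : J -> J -> k) : \sum_c \sum_e al c e *: (w c * w e) = 0 ->
  (forall c, al c c = 0) /\ (forall c e, c != e -> al c e + qq c e * al e c = 0).
Proof.
move=> h; split.
  move=> c.
  pose b (i : J) : 'M[k]_3 := (i == c)%:R *: J3 k.
  have hb : q_rels qq b.
    move=> i j; rewrite /b !J3M scalerA; congr (_ *: _).
    case: (eqVneq i c) => [->|ic]; first case: (eqVneq j c) => [->|jc]; cl => //.
    all: try by rewrite Hq.1.
  have [phi [hphi phib]] := hom_exists HS hb.
  have := congr1 phi h; rewrite ah0 // ah_sum //.
  rewrite (eq_bigr (fun x => \sum_e (al x e * ((x == c)%:R * (e == c)%:R)) *: E3 k (isT : (2 < 3)%N) (isT : (0 < 3)%N))); last first.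
    move=> x _; rewrite ah_sum //; apply: eq_bigr => e _.
    by rewrite (ahZ hphi) (ahM hphi) !phib /b J3M scalerA.
  move/(congr1 (fun M : 'M[k]_3 => M (Ordinal (isT : (2 < 3)%N)) (Ordinal (isT : (0 < 3)%N)))).
  rewrite summxE (eq_bigr (fun x => \sum_e al x e * ((x == c)%:R * (e == c)%:R))); last first.
    by move=> x _; rewrite summxE; apply: eq_bigr => e _; rewrite !mxE /= mulr1.
  by rewrite dd mxE.
move=> c e ce.
pose q := qq c e.
pose b (i : J) : 'M[k]_4 := (i == c)%:R *: X4 k + (i == e)%:R *: Y4 q.
have hb : q_rels qq b.
  move=> i j; rewrite /b !prodXY scalerA; congr (_ *: _).
  have ec : e != c by rewrite eq_sym.
  case: (eqVneq i c) => [->|ic]; case: (eqVneq i e) => [ie|ie]; 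
    case: (eqVneq j c) => [jc|jc]; case: (eqVneq j e) => [je|je];
    rewrite ?ie ?je ?jc; cl; rewrite ?eqxx ?(negbTE ce) ?(negbTE ec); cl => //.
  all: try by rewrite mulr1.
  all: try by rewrite /q Hq.2.
  by move: ce; rewrite -jc -je eqxx.
have [phi [hphi phib]] := hom_exists HS hb.
have := congr1 phi h; rewrite ah0 // ah_sum //.
rewrite (eq_bigr (fun x => \sum_y (al x y * ((x == c)%:R * (y == e)%:R + q * ((x == e)%:R * (y == c)%:R))) *: E30 k)); last first.
  move=> x _; rewrite ah_sum //; apply: eq_bigr => y _.
  by rewrite (ahZ hphi) (ahM hphi) !phib /b prodXY scalerA.
move/(congr1 (fun M : 'M[k]_4 => M (o4 (isT : (3 < 4)%N)) (o4 (isT : (0 < 4)%N)))).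
rewrite summxE (eq_bigr (fun x => \sum_y al x y * ((x == c)%:R * (y == e)%:R + q * ((x == e)%:R * (y == c)%:R)))); last first.
  by move=> x _; rewrite summxE; apply: eq_bigr => y _; rewrite E30_30.
rewrite (eq_bigr (fun x => \sum_y al x y * ((x == c)%:R * (y == e)%:R) + q * \sum_y al x y * ((x == e)%:R * (y == c)%:R))); last first.
  move=> x _; rewrite mulr_sumr -big_split; apply: eq_bigr => y _.
  by rewrite mulrDr [al x y * (q * _)]mulrCA.
by rewrite big_split /= -mulr_sumr !dd mxE.
Qed.
End Gen3.
Lemma prod_lin (k : fieldType) (J : finType) (B : algType k) (w : J -> B) (x y : J -> k) :
  (\sum_a x a *: w a) * (\sum_c y c *: w c) = \sum_a \sum_c (x a * y c) *: (w a * w c).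
Proof.
rewrite mulr_suml; apply: eq_bigr => a _; rewrite mulr_sumr; apply: eq_bigr => c _.
by rewrite -scalerAl -scalerAr scalerA.
Qed.

Lemma mul_sumr_lin (k : fieldType) (I : finType) (B : algType k) (z : B) (x : I -> k) (u : I -> B) :
  z * (\sum_i x i *: u i) = \sum_i x i *: (z * u i).
Proof. by rewrite mulr_sumr; apply: eq_bigr => i _; rewrite scalerAr. Qed.

Lemma mul_suml_lin (k : fieldType) (I : finType) (B : algType k) (z : B) (x : I -> k) (u : I -> B) :
  (\sum_i x i *: u i) * z = \sum_i x i *: (u i * z).
Proof. by rewrite mulr_suml; apply: eq_bigr => i _; rewrite scalerAl. Qed.

Section Gen4.
Variable k : fieldType.
Variables (J : finType) (qq : J -> J -> k) (B : algType k) (w : J -> B).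
Hypothesis Hq : is_qpm qq.
Hypothesis HS : is_Sq qq w.

Lemma RI (d g : J -> k) b : d b != 0 ->
  (\sum_a g a *: w a) * (\sum_c d c *: w c) = 0 -> forall a, g a = 0.
Proof.
move=> db h; rewrite prod_lin in h.
have [h1 h2] := deg2 Hq HS h.
have gb : g b = 0.
  by move/eqP: (h1 b); rewrite mulf_eq0 (negbTE db) orbF => /eqP.
move=> a; case: (eqVneq a b) => [->//|ab].
move/eqP: (h2 a b ab); rewrite gb mul0r mulr0 addr0 mulf_eq0 (negbTE db) orbF.
by move/eqP.
Qed.

Lemma NL (d t : J -> k) a b : d b != 0 ->
  (\sum_c d c *: w c) * w a = (\sum_c t c *: w c) * (\sum_c d c *: w c) ->
  forall c, t c = (c == a)%:R * qq a b.
Proof.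
move=> db h.
have wa : w a = \sum_e (a == e)%:R *: w e by rewrite sum_delta.
rewrite [X in _ * X = _]wa !prod_lin in h.
move/eqP: h; rewrite -subr_eq0 -sumrB => /eqP h.
have h' : \sum_c \sum_e (d c * (a == e)%:R - t c * d e) *: (w c * w e) = 0.
  by rewrite -[RHS]h; apply: eq_bigr => c _; rewrite -sumrB; apply: eq_bigr => e _; rewrite scalerBl.
have [h1 h2] := deg2 Hq HS h'.
have qab : qq a b * qq b a = 1 := Hq.2 a b.
case: (eqVneq a b) => [eab|ab].
  subst b.
  have ta : t a = 1.
    have := h1 a; cl => e.
    have e2 : d a * (1 - t a) = 0 by rewrite -[RHS]e; ring.
    move/eqP: e2; rewrite mulf_eq0 (negbTE db) /= subr_eq0 => /eqP.
    by move=> <-.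
  move=> c; case: (eqVneq c a) => [->|ca]; first by rewrite ta mul1r Hq.1.
  cl; case: (eqVneq (d c) 0) => [dc0|dc0].
    have := h2 c a ca; rewrite eq_sym (negbTE ca) dc0 ta; cl => e.
    have e2 : t c * d a = 0 by rewrite -oppr0 -[0 in RHS]e; ring.
    by move/eqP: e2; rewrite mulf_eq0 (negbTE db) orbF => /eqP.
  have := h1 c; rewrite eq_sym (negbTE ca); cl => e.
  have e2 : t c * d c = 0 by rewrite -oppr0 -[0 in RHS]e; ring.
  by move/eqP: e2; rewrite mulf_eq0 (negbTE dc0) orbF => /eqP.
have tb : t b = 0.
  have := h1 b; rewrite (negbTE ab); cl => e.
  have e2 : t b * d b = 0 by rewrite -oppr0 -[0 in RHS]e; ring.
  by move/eqP: e2; rewrite mulf_eq0 (negbTE db) orbF => /eqP.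
move=> c; case: (eqVneq c a) => [->|ca].
  have ba : b != a by rewrite eq_sym.
  have := h2 b a ba; rewrite (negbTE ab) tb; cl => e.
  have e2 : d b * (1 - qq b a * t a) = 0 by rewrite -[RHS]e; ring.
  move/eqP: e2; rewrite mulf_eq0 (negbTE db) /= subr_eq0 => /eqP e3.
  by rewrite -[t a]mul1r -qab -mulrA -e3 mulr1.
cl; case: (eqVneq c b) => [->//|cb].
have := h2 c b cb; rewrite (negbTE ab) eq_sym (negbTE ca) tb; cl => e.
have e2 : t c * d b = 0 by rewrite -oppr0 -[0 in RHS]e; ring.
by move/eqP: e2; rewrite mulf_eq0 (negbTE db) orbF => /eqP.
Qed.
End Gen4.
Section Gen5.
Variable k : fieldType.
Variables (J : finType) (qq : J -> J -> k) (B : algType k) (w : J -> B).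
Hypothesis Hq : is_qpm qq.
Hypothesis HS : is_Sq qq w.

Lemma Qlem f : good w f -> injective f -> forall i a j b,
  Pc HS f i a != 0 -> Pc HS f j b != 0 -> qq a b = qq i j.
Proof.
move=> gf fi i a j b ia jb.
have hf := gf.1.
pose d := Pc HS f j.
have ysp : f (w j) = \sum_c d c *: w c := Pc_span HS gf j.
have rel : forall i, f (w j) * f (w i) = qq i j *: (f (w i) * f (w j)).
  by move=> i'; have := qrels_hom HS hf i' j.
have comm : forall a', f (w j) * w a' = qq a' b *: (w a' * f (w j)).
  move=> a'.
  pose t c := \sum_i (Nc HS f a' i * qq i j) * Pc HS f i c.
  have e : f (w j) * w a' = (\sum_c t c *: w c) * f (w j).
    rewrite {1}(w_from_f HS gf fi a') mul_sumr_lin.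
    rewrite (eq_bigr (fun i => (Nc HS f a' i * qq i j) *: (f (w i) * f (w j)))); last first.
      by move=> i' _; rewrite rel scalerA.
    rewrite -mul_suml_lin; congr (_ * _).
    rewrite (eq_bigr (fun i => (Nc HS f a' i * qq i j) *: \sum_c Pc HS f i c *: w c)); last first.
      by move=> i' _; rewrite -Pc_span.
    by rewrite lin_swap.
  have e' := e; rewrite [in X in _ = _ * X]ysp {1}ysp in e'.
  have ht := NL Hq HS jb e'.
  have et : \sum_c t c *: w c = qq a' b *: w a'.
    rewrite (eq_bigr (fun c => (a' == c)%:R *: (qq a' b *: w c))); last first.
      by move=> c _; rewrite ht scalerA eq_sym.
    by rewrite sum_delta.
  by rewrite e et -scalerAl.
have e1 : f (w j) * f (w i) = (\sum_c (Pc HS f i c * qq c b) *: w c) * f (w j).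
  rewrite {1}(Pc_span HS gf i) mul_sumr_lin mul_suml_lin; apply: eq_bigr => c _.
  by rewrite comm scalerA.
have e2 : f (w j) * f (w i) = (\sum_c (qq i j * Pc HS f i c) *: w c) * f (w j).
  rewrite rel {1}(Pc_span HS gf i) mul_suml_lin mul_suml_lin scaler_sumr; apply: eq_bigr => c _.
  by rewrite scalerA.
have e3 : (\sum_c (Pc HS f i c * qq c b - qq i j * Pc HS f i c) *: w c) * (\sum_c d c *: w c) = 0.
  rewrite -ysp (eq_bigr (fun c => (Pc HS f i c * qq c b) *: w c - (qq i j * Pc HS f i c) *: w c)); last first.
    by move=> c _; rewrite scalerBl.
  by rewrite sumrB mulrBl -e1 -e2 subrr.
have := RI Hq HS jb e3 a => e4.
have e5 : Pc HS f i a * (qq a b - qq i j) = 0 by rewrite -[RHS]e4; ring.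
move/eqP: e5; rewrite mulf_eq0 (negbTE ia) /= subr_eq0 => /eqP //.
Qed.
End Gen5.
Section Rel.
Variables (k : fieldType) (n : nat) (q : 'M[k]_n).
Hypothesis Hq : is_qpm (fun i j => q i j).

Lemma qR_sym i j : qR q i j -> qR q j i.
Proof. exact: rst_sym. Qed.
Lemma qR_trans i j l : qR q i j -> qR q j l -> qR q i l.
Proof. exact: rst_trans. Qed.
Lemma qR_refl i : qR q i i.
Proof. exact: rst_refl. Qed.

Lemma row_perm_qR (tau : 'I_n -> 'I_n) i a : injective tau ->
  (forall i', q a (tau i') = q i i') -> qR q i a.
Proof.
move=> ti h; apply: rst_step; exists [:: a]; split => //.
move=> m /andP [m0 m2]; have -> : m = 1%N by case: m m0 m2 => [|[|]].
left => /=.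
have hp : perm_eq [seq q i x | x <- enum 'I_n] [seq q a x | x <- enum 'I_n].
  have -> : [seq q i x | x <- enum 'I_n] = [seq q a x | x <- [seq tau y | y <- enum 'I_n]].
    by rewrite -map_comp; apply: eq_map => x /=; rewrite h.
  apply: perm_map; apply: uniq_perm.
  - by rewrite map_inj_uniq //; exact: enum_uniq.
  - exact: enum_uniq.
  move=> x; have [g tg gt] := injF_bij ti.
  rewrite mem_enum -(gt x) map_f //; exact: mem_enum.
exact: hp.
Qed.

Lemma chain_const i l b : qarrow q i l -> ~ qR q i b -> q i b = q l b.
Proof.
case=> rest [ok hl] nb; apply/eqP/negPn/negP => ne; apply: nb; apply: rst_step.
exists (rcons rest b); split; last by rewrite last_rcons.
move=> m /andP [m0]; rewrite /= size_rcons ltnS => ms.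
case: m m0 ms => [//|m] _ ms /=.
have E : forall t, (t <= size rest)%N -> nth i (i :: rcons rest b) t = nth i (i :: rest) t.
  by move=> t ht; rewrite -rcons_cons nth_rcons /= ltnS ht.
case: (ltnP m (size rest)) => hm.
  have := ok m.+1; rewrite /= ltnS hm => /(_ isT).
  have E2 : nth i (rcons rest b) m = nth i rest m by rewrite nth_rcons hm.
  rewrite E2 (E m (ltnW hm)).
  case=> [hp|[t [ht hne]]]; [left => // | right; exists t; split => //].
  by rewrite (E t (leq_trans (ht : (t <= m)%N) (ltnW hm))).
have ems : m = size rest by apply/eqP; rewrite eqn_leq hm -ltnS ms.
subst m; right; exists 0%N; split => //=.
rewrite nth_rcons ltnn eqxx.
rewrite E // -[size rest]/((size (i :: rest)).-1) nth_last /= hl.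
by move=> e; move/eqP: ne; apply; rewrite e.
Qed.
Lemma qR_const x y : qR q x y -> forall b, ~ qR q x b -> q x b = q y b.
Proof.
elim=> {x y} [x y hxy|x|x y hxy IH|x y z hxy IH1 hyz IH2] b nb //.
- exact: chain_const.
- have nb' : ~ qR q x b by move=> h; apply: nb; apply: qR_trans (qR_sym hxy) h.
  by rewrite (IH b nb').
- have nb' : ~ qR q y b by move=> h; apply: nb; apply: qR_trans hxy h.
  by rewrite (IH1 b nb) (IH2 b nb').
Qed.

Lemma qR_cross i j a b : ~ qR q i j -> qR q i a -> qR q j b -> q a b = q i j.
Proof.
move=> nij ia jb.
have nib : ~ qR q i b by move=> h; apply: nij; apply: qR_trans h (qR_sym jb).
have nji : ~ qR q j i by move=> h; apply: nij; apply: qR_sym.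
have e1 : q i b = q a b := qR_const ia nib.
have e2 : q j i = q b i := qR_const jb nji.
have h1 := Hq.2 i b; have h2 := Hq.2 i j; rewrite /= in h1 h2.
rewrite -e1; rewrite e2 in h2.
by rewrite -[q i b]mulr1 -h2 mulrCA h1 mulr1.
Qed.
End Rel.
Lemma comm_span (k : fieldType) (B : algType k) (S T : finType) (fs : S -> B) (ft : T -> B)
  (lam : k) (c : S -> k) (c' : T -> k) :
  (forall s t, ft t * fs s = lam *: (fs s * ft t)) ->
  (\sum_t c' t *: ft t) * (\sum_s c s *: fs s) = lam *: ((\sum_s c s *: fs s) * (\sum_t c' t *: ft t)).
Proof.
move=> h.
rewrite mul_suml_lin (eq_bigr (fun t => \sum_s (c' t * c s * lam) *: (fs s * ft t))); last first.
  move=> t _; rewrite mul_sumr_lin scaler_sumr; apply: eq_bigr => s _.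
  by rewrite h !scalerA.
rewrite exchange_big /= mul_suml_lin scaler_sumr; apply: eq_bigr => s _.
rewrite mul_sumr_lin !scaler_sumr; apply: eq_bigr => t _.
by rewrite !scalerA; congr (_ *: _); ring.
Qed.

Lemma gr_good (k : fieldType) (J : finType) (B : algType k) (w : J -> B) f :
  gr_aut w f -> good w f.
Proof.
case=> hf _ hd; split => // i; apply: deg1_span; apply: hd.
by apply: span_deg1; apply: inspan_gen.
Qed.

Lemma bij_ex (T1 T2 : Type) (f : T1 -> T2) : bijective f -> exists g, cancel f g /\ cancel g f.
Proof. by case=> g h1 h2; exists g. Qed.

Lemma dec_ex (P : Prop) : exists b : bool, b = true <-> P.
Proof.
case: (classic P) => p; first by exists true.
by exists false; split => // h; case: (p h).
Qed.
Definition dec (P : Prop) : bool := sval (constructive_indefinite_description _ (dec_ex P)).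
Lemma decP (P : Prop) : dec P = true <-> P.
Proof. by rewrite /dec; case: constructive_indefinite_description. Qed.

Section Main.
Variables (k : fieldType) (n : nat) (q : 'M[k]_n) (A : algType k) (v : 'I_n -> A)
  (AD : {set 'I_n} -> algType k) (vD : forall D : {set 'I_n}, {i : 'I_n | i \in D} -> AD D).
Hypothesis Hq : is_qpm (fun i j => q i j).
Hypothesis HS : is_Sq (fun i j => q i j) v.
Hypothesis HSD : forall D, is_class q D -> is_Sq (qsub q D) (@vD D).

Definition pg (D : {set 'I_n}) (a : 'I_n) : AD D :=
  if insub a is Some x then @vD D x else 0.

Lemma pg_in (D : {set 'I_n}) (a : 'I_n) (Ha : a \in D) : pg D a = @vD D (exist _ a Ha).
Proof. by rewrite /pg insubT. Qed.
Lemma pg_out (D : {set 'I_n}) (a : 'I_n) : a \notin D -> pg D a = 0.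
Proof. by move=> h; rewrite /pg insubN. Qed.
Lemma pg_span (D : {set 'I_n}) (a : 'I_n) : inspan (@vD D) (pg D a).
Proof.
case: (boolP (a \in D)) => h; first by rewrite (pg_in h); apply: inspan_gen.
by rewrite pg_out //; apply: inspan0.
Qed.

Lemma iopi_ex D (hD : is_class q D) : exists p : (AD D -> A) * (A -> AD D),
  [/\ alg_hom p.1, forall x, p.1 (@vD D x) = v (val x), alg_hom p.2 & forall a, p.2 (v a) = pg D a].
Proof.
have h1 : q_rels (qsub q D) (fun x => v (val x)).
  by move=> i j; exact: HS.1.
have [io [hio eio]] := hom_exists (HSD hD) h1.
have h2 : q_rels (fun i j => q i j) (pg D).
  move=> i j; case: (boolP (i \in D)) => hi; case: (boolP (j \in D)) => hj;
   rewrite ?(pg_in hi) ?(pg_in hj) ?(pg_out hi) ?(pg_out hj) ?mul0r ?mulr0 ?scaler0 //.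
  exact: (HSD hD).1 (exist _ i hi) (exist _ j hj).
have [pr [hpr epr]] := hom_exists HS h2.
by exists (io, pr).
Qed.

Definition IP D (hD : is_class q D) := sval (constructive_indefinite_description _ (iopi_ex hD)).
Lemma IPP D (hD : is_class q D) : [/\ alg_hom (IP hD).1, forall x, (IP hD).1 (@vD D x) = v (val x),
  alg_hom (IP hD).2 & forall a, (IP hD).2 (v a) = pg D a].
Proof. rewrite /IP; case: constructive_indefinite_description => p /= h; exact: h. Qed.

Definition io D (hD : is_class q D) := (IP hD).1.
Definition pr D (hD : is_class q D) := (IP hD).2.
Lemma io_hom D hD : alg_hom (@io D hD). Proof. by case: (IPP hD) => h _ _ _; apply: h. Qed.
Lemma io_v D hD x : @io D hD (@vD D x) = v (val x). Proof. by case: (IPP hD) => _ h _ _; apply: h. Qed.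
Lemma pr_hom D hD : alg_hom (@pr D hD). Proof. by case: (IPP hD) => _ _ h _; apply: h. Qed.
Lemma pr_v D hD a : @pr D hD (v a) = pg D a. Proof. by case: (IPP hD) => _ _ _ h; apply: h. Qed.

Definition Phi (f : A -> A) D (hD : is_class q D) (x : AD D) : AD D := pr hD (f (io hD x)).

Lemma pr_io D hD x : pr hD (@io D hD x) = x.
Proof.
apply: (hom_ext (HSD hD) (ah_comp (pr_hom hD) (io_hom hD)) (ah_id _)) => y /=.
by rewrite io_v pr_v; case: y => a Ha /=; exact: pg_in.
Qed.

Lemma class_mem (D : {set 'I_n}) (i : 'I_n) : is_class q D -> i \in D -> forall j, j \in D <-> qR q i j.
Proof.
case=> i0 h hi j; have i0i := (h i).1 hi; split => hj.
  exact: qR_trans (qR_sym i0i) ((h j).1 hj).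
by apply/(h j).2; apply: qR_trans i0i hj.
Qed.

Lemma block f : good v f -> injective f -> forall i a, Pc HS f i a != 0 -> qR q i a.
Proof.
move=> gf fi; have [tau [ti ht]] := matching HS gf fi.
move=> i a ia; apply: (@row_perm_qR _ _ q tau) => // i'.
exact: (Qlem Hq gf fi ia (ht i')).
Qed.

Lemma block_in f D (hD : is_class q D) i a : good v f -> injective f -> i \in D -> a \notin D ->
  Pc HS f i a = 0.
Proof.
move=> gf fi hi ha; apply/eqP/negPn/negP => h.
by move/negP: ha; apply; apply/(class_mem hD hi a).2; apply: block h.
Qed.

Lemma io_pr_g f D (hD : is_class q D) i : good v f -> injective f -> i \in D ->
  io hD (pr hD (f (v i))) = f (v i).
Proof.
move=> gf fi hi; rewrite (Pc_span HS gf i) (ah_lin _ _ _ (pr_hom hD)) (ah_lin _ _ _ (io_hom hD)).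
apply: eq_bigr => a _; case: (boolP (a \in D)) => ha.
  by rewrite pr_v (pg_in ha) io_v.
by rewrite (block_in hD gf fi hi ha) !scale0r.
Qed.

Lemma Phi_hom f D hD : alg_hom f -> alg_hom (@Phi f D hD).
Proof. by move=> hf; apply: ah_comp (pr_hom hD) (ah_comp hf (io_hom hD)). Qed.

Lemma Phi_comp f g D (hD : is_class q D) : good v f -> good v g -> injective g ->
  Phi (f \o g) hD =1 Phi f hD \o Phi g hD.
Proof.
move=> gf gg gi.
apply: (hom_ext (HSD hD) (Phi_hom _ (ah_comp gf.1 gg.1)) (ah_comp (Phi_hom _ gf.1) (Phi_hom _ gg.1))) => x /=.
by rewrite /Phi /= !io_v io_pr_g //; case: x.
Qed.

Lemma Phi_span f D (hD : is_class q D) : good v f -> forall x, inspan (@vD D) (Phi f hD (@vD D x)).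
Proof.
move=> gf x; rewrite /Phi io_v (Pc_span HS gf) (ah_lin _ _ _ (pr_hom hD)).
by apply: inspan_sum => a _; apply: inspanZ; rewrite pr_v; apply: pg_span.
Qed.

Lemma Phi_gr f D (hD : is_class q D) : gr_aut v f -> gr_aut (@vD D) (Phi f hD).
Proof.
move=> gr; have gf := gr_good gr; case: gr => hf /bij_ex [g [fg gf']] _.
have gg := good_inv HS gf fg gf'.
split; first exact: Phi_hom.
  exists (Phi g hD) => x.
    by have := Phi_comp hD gg gf (can_inj fg) x; rewrite /= => <-; rewrite /Phi /= fg pr_io.
  by have := Phi_comp hD gf gg (can_inj gf') x; rewrite /= => <-; rewrite /Phi /= gf' pr_io.
exact: deg_pres (Phi_hom _ hf) (Phi_span hD gf).
Qed.

Definition Dset (i : 'I_n) : {set 'I_n} := [set j | dec (qR q i j)].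
Lemma Dset_mem i j : j \in Dset i <-> qR q i j.
Proof. by rewrite inE; apply: decP. Qed.
Lemma Dset_class i : is_class q (Dset i).
Proof. by exists i => j; apply: Dset_mem. Qed.
Lemma Dset_self i : i \in Dset i.
Proof. exact: (Dset_mem i i).2 (@qR_refl _ _ q i). Qed.
Lemma class_eq (D : {set 'I_n}) i : is_class q D -> i \in D -> D = Dset i.
Proof.
move=> hD hi; apply/setP => j; apply/idP/idP => h.
  by apply: (Dset_mem i j).2; exact: (class_mem hD hi j).1 h.
by apply: (class_mem hD hi j).2; exact: (Dset_mem i j).1 h.
Qed.

Lemma coef_pr D (hD : is_class q D) (c : 'I_n -> k) x :
  coef (HSD hD) x (pr hD (\sum_a c a *: v a)) = c (val x).
Proof.
rewrite (ah_lin _ _ _ (pr_hom hD)) coef_sum.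
have [_ [cZ cw]] := coefP (HSD hD).
rewrite -[RHS](sum_delta_r c (val x)); apply: eq_bigr => a _.
rewrite cZ pr_v; congr (_ * _).
case: (boolP (a \in D)) => ha.
  rewrite (pg_in ha) cw; case: x => x hx /=.
  by rewrite -val_eqE /= eq_sym.
rewrite pg_out // coef0; case: x => x hx /=.
have /negbTE -> // : a != x by apply: contraNneq ha => ->.
Qed.

Lemma Phi_inj f g : gr_aut v f -> gr_aut v g ->
  (forall D (hD : is_class q D), Phi f hD =1 Phi g hD) -> f =1 g.
Proof.
move=> grf grg h; have gf := gr_good grf; have gg := gr_good grg.
have fi : injective f by case: grf => _ /bij_inj.
have gi : injective g by case: grg => _ /bij_inj.
apply: (hom_ext HS gf.1 gg.1) => i.
pose hD := Dset_class i.
have hc : forall a, a \in Dset i -> Pc HS f i a = Pc HS g i a.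
  move=> a ha.
  have e := h _ hD (@vD _ (exist _ i (Dset_self i))).
  rewrite /Phi io_v /= in e.
  have := congr1 (coef (HSD hD) (exist _ a ha)) e.
  by rewrite (Pc_span HS gf i) (Pc_span HS gg i) !coef_pr.
rewrite (Pc_span HS gf i) (Pc_span HS gg i); apply: eq_bigr => a _; congr (_ *: _).
case: (boolP (a \in Dset i)) => ha; first exact: hc.
by rewrite (block_in hD gf fi (Dset_self i) ha) (block_in hD gg gi (Dset_self i) ha).
Qed.

Section Cons.
Variable h' : forall D, is_class q D -> AD D -> AD D.
Hypothesis Hh : forall D (hD : is_class q D),
  alg_hom (h' hD) /\ forall x, inspan (@vD D) (h' hD (@vD D x)).

Definition Y D (hD : is_class q D) j (hj : j \in D) : A := io hD (h' hD (@vD D (exist _ j hj))).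
Lemma Y_indep D hD j hj D' hD' hj' : D = D' -> @Y D hD j hj = @Y D' hD' j hj'.
Proof.
move=> e; subst D'.
by rewrite (proof_irrelevance _ hD hD') (proof_irrelevance _ hj hj').
Qed.
Definition yv i := @Y (Dset i) (Dset_class i) i (Dset_self i).
Lemma yv_span i : exists c : {j | j \in Dset i} -> k, yv i = \sum_x c x *: v (val x).
Proof.
have [_ hs] := Hh (Dset_class i).
case: (hs (exist _ i (Dset_self i))) => c e; exists c.
rewrite /yv /Y e (ah_lin _ _ _ (io_hom _)); apply: eq_bigr => x _; by rewrite io_v.
Qed.
Lemma yv_in D (hD : is_class q D) j (hj : j \in D) : yv j = Y hD hj.
Proof. by apply: Y_indep; symmetry; exact: class_eq hD hj. Qed.

Lemma yv_rel : q_rels (fun i j => q i j) yv.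
Proof.
move=> i j /=; case: (classic (qR q i j)) => hij.
  have hj : j \in Dset i := (Dset_mem i j).2 hij.
  rewrite (yv_in (Dset_class i) hj) /yv /Y.
  have [hh _] := Hh (Dset_class i).
  rewrite -(ahM (io_hom _)) -(ahM hh) ((HSD (Dset_class i)).1) (ahZ hh) (ahZ (io_hom _)).
  by rewrite (ahM hh) (ahM (io_hom _)).
have [c ec] := yv_span i; have [c' ec'] := yv_span j.
rewrite ec ec'; apply: comm_span => s t.
rewrite HS.1 /= (qR_cross Hq hij ((Dset_mem i (val s)).1 (valP s)) ((Dset_mem j (val t)).1 (valP t))).
done.
Qed.

Lemma construct : exists f : A -> A, [/\ alg_hom f, forall i, inspan v (f (v i)) &
  forall D (hD : is_class q D) x, f (io hD x) = io hD (h' hD x)].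
Proof.
have [f [hf fv]] := hom_exists HS yv_rel.
exists f; split => //.
  move=> i; rewrite fv; have [c ->] := yv_span i.
  by apply: inspan_sum => x _; apply: inspanZ; apply: inspan_gen.
move=> D hD; apply: (hom_ext (HSD hD) (ah_comp hf (io_hom hD)) (ah_comp (io_hom hD) (Hh hD).1)) => x /=.
rewrite io_v fv (yv_in hD (valP x)) /Y.
by have -> : exist (fun i : 'I_n => i \in D) (val x) (valP x) = x by apply: val_inj.
Qed.
End Cons.

Lemma gr_bij (J : finType) (B : algType k) (w : J -> B) f : gr_aut w f -> bijective f.
Proof. by case. Qed.

Lemma Phi_surj (h : forall D, is_class q D -> AD D -> AD D) :
  (forall D (hD : is_class q D), gr_aut (@vD D) (h D hD)) ->
  exists f, gr_aut v f /\ forall D (hD : is_class q D), Phi f hD =1 h D hD.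
Proof.
move=> Hg.
pose hinv D (hD : is_class q D) := sval (constructive_indefinite_description _ (bij_ex (gr_bij (Hg D hD)))).
have hinvP : forall D hD, cancel (h D hD) (@hinv D hD) /\ cancel (@hinv D hD) (h D hD).
  by move=> D hD; rewrite /hinv; case: constructive_indefinite_description.
have Hh1 : forall D (hD : is_class q D), alg_hom (h D hD) /\ forall x, inspan (@vD D) (h D hD (@vD D x)).
  by move=> D hD; exact: gr_good (Hg D hD).
have Hh2 : forall D (hD : is_class q D), alg_hom (@hinv D hD) /\ forall x, inspan (@vD D) (@hinv D hD (@vD D x)).
  move=> D hD; have [c1 c2] := hinvP D hD.
  have := @good_inv _ _ _ _ _ (HSD hD) _ _ (gr_good (Hg D hD)) c1 c2.
  by case.
have [f [hf fsp fio]] := construct Hh1.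
have [g [hg gsp gio]] := construct Hh2.
have fg : cancel g f.
  move=> x; apply: (hom_ext HS (ah_comp hf hg) (ah_id _)) => i /=.
  pose hD := Dset_class i.
  have <- : io hD (@vD _ (exist _ i (Dset_self i))) = v i by rewrite io_v.
  by rewrite gio fio (hinvP _ hD).2.
have gf : cancel f g.
  move=> x; apply: (hom_ext HS (ah_comp hg hf) (ah_id _)) => i /=.
  pose hD := Dset_class i.
  have <- : io hD (@vD _ (exist _ i (Dset_self i))) = v i by rewrite io_v.
  by rewrite fio gio (hinvP _ hD).1.
exists f; split.
  split => //; first by exists g.
  exact: deg_pres hf fsp.
by move=> D hD x; rewrite /Phi fio pr_io.
Qed.

End Main.

Theorem theorem4p2 (k : fieldType) (n : nat) (q : 'M[k]_n)
  (A : algType k) (v : 'I_n -> A)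
  (AD : {set 'I_n} -> algType k)
  (vD : forall D : {set 'I_n}, {i : 'I_n | i \in D} -> AD D) :
  is_qpm (fun i j => q i j) ->
  is_Sq (fun i j => q i j) v ->
  (forall D, is_class q D -> is_Sq (qsub q D) (vD D)) ->
  exists Phi : (A -> A) -> forall D : {set 'I_n}, is_class q D -> AD D -> AD D,
    [/\ (forall f, gr_aut v f -> forall D (hD : is_class q D), gr_aut (vD D) (Phi f D hD)),
        (forall f g, gr_aut v f -> gr_aut v g ->
           (forall D (hD : is_class q D), Phi f D hD =1 Phi g D hD) -> f =1 g),
        (forall h : forall D : {set 'I_n}, is_class q D -> AD D -> AD D,
           (forall D (hD : is_class q D), gr_aut (vD D) (h D hD)) ->
           exists f, gr_aut v f /\
             forall D (hD : is_class q D), Phi f D hD =1 h D hD)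
      & (forall f g, gr_aut v f -> gr_aut v g ->
           forall D (hD : is_class q D),
             Phi (f \o g) D hD =1 (Phi f D hD \o Phi g D hD))].
Proof.
move=> Hq HS HSD.
exists (fun f D hD => Phi HS HSD f hD).
split.
- by move=> f grf D hD; exact: (Phi_gr Hq HS HSD hD grf).
- by move=> f g grf grg h; exact: (Phi_inj Hq (HS:=HS) (HSD:=HSD) grf grg h).
- by move=> h Hg; exact: (Phi_surj Hq HS HSD Hg).
move=> f g grf grg D hD.
have gi : injective g by case: grg => _ /bij_inj.
exact: (Phi_comp Hq HS HSD hD (gr_good grf) (gr_good grg) gi).
Qed.
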